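(* Let $L$ be a finite lattice with at least three elements, with minimum $\hat 0$ and maximum $\hat 1$, and let $a,b\in L$ with $\hat 0<a<b$. Then $$\sum_{\substack{x\in L\\ x\wedge a=\hat 0}} J(x,b,\hat 1)=0,$$ where terms with $x\not\le b$ are omitted (i.e. $J(x,b,\hat 1)$ is taken as $0$ unless $x\le b$).
   Context: Let $\delta_3(x,y,z)=1$ if $x=y=z$ and $0$ otherwise. The function $J$ on triples $x\le y\le z$ of $L$ is the unique integer-valued function satisfying $\sum_{x\le a\le y\le b\le z}J(a,y,b)=\delta_3(x,y,z)$ for all $x\le y\le z$ in $L$ (sum over $a,b\in L$). *)

(* Defs.v *)
From HB Require Import structures.
From mathcomp Require Import all_boot all_order all_algebra.
Set Implicit Arguments. Unset Strict Implicit. Unset Printing Implicit Defensive.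
Import Order.TTheory GRing.Theory Num.Theory.
Local Open Scope order_scope.

Definition delta3 {d} {L : finTBLatticeType d} (x y z : L) : int :=
  if (x == y) && (y == z) then 1%R else 0%R.

(* J satisfies the defining relation of the paper's function J:
   for all x <= y <= z,  sum_{x <= a <= y <= b <= z} J(a,y,b) = delta_3(x,y,z).
   (Values of J outside triples u <= v <= w are irrelevant.) *)
Definition is_J {d} {L : finTBLatticeType d} (J : L -> L -> L -> int) : Prop :=
  forall x y z : L, x <= y -> y <= z ->
    (\sum_(a : L | (x <= a)%O && (a <= y)%O) \sum_(b : L | (y <= b)%O && (b <= z)%O) J a y b)%R
    = delta3 x y z.

(* Main.v *)
Require Import Defs.
From HB Require Import structures.
From mathcomp Require Import all_boot all_order all_algebra.
Import Order.TTheory GRing.Theory Num.Theory.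
Local Open Scope order_scope.

Lemma down_ind d (L : finTBLatticeType d) (f : L -> int) (a : L) :
  (forall y, y <= a -> (\sum_(u | (y <= u)%O && (u <= a)%O) f u)%R = 0%R) ->
  forall y, y <= a -> f y = 0%R.
Proof.
move=> H y.
move: {2}#|[set u | y < u]| (leqnn #|[set u | y < u]|) => n.
elim: n y => [|n IH] y Hn ya.
- have := H y ya. rewrite (bigD1 y) /= ?lexx ?ya // big1 ?addr0 //.
  move=> u /andP[/andP[yu ua] uy].
  have : u \in [set u | y < u] by rewrite inE lt_neqAle eq_sym uy yu.
  by move: Hn; rewrite leqn0 => /eqP/card0_eq ->.
- have := H y ya. rewrite (bigD1 y) /= ?lexx ?ya // big1 ?addr0 //.
  move=> u /andP[/andP[yu ua] uy].
  have yu' : y < u by rewrite lt_neqAle eq_sym uy yu.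
  apply: IH => //. rewrite -ltnS. apply: leq_trans Hn.
  apply: proper_card. apply/properP; split.
  + apply/subsetP => v; rewrite !inE => uv; exact: lt_trans yu' uv.
  + exists u; by rewrite !inE ?ltxx.
Qed.

Lemma up_ind d (L : finTBLatticeType d) (f : L -> int) (b : L) :
  (forall z, b <= z -> (\sum_(c | (b <= c)%O && (c <= z)%O) f c)%R = 0%R) ->
  forall z, b <= z -> f z = 0%R.
Proof.
move=> H z.
move: {2}#|[set u | u < z]| (leqnn #|[set u | u < z]|) => n.
elim: n z => [|n IH] z Hn bz.
- have := H z bz. rewrite (bigD1 z) /= ?lexx ?bz // big1 ?addr0 //.
  move=> u /andP[/andP[bu uz] uz'].
  have : u \in [set u | u < z] by rewrite inE lt_neqAle uz' uz.
  by move: Hn; rewrite leqn0 => /eqP/card0_eq ->.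
- have := H z bz. rewrite (bigD1 z) /= ?lexx ?bz // big1 ?addr0 //.
  move=> u /andP[/andP[bu uz] uz'].
  have uz2 : u < z by rewrite lt_neqAle uz' uz.
  apply: IH => //. rewrite -ltnS. apply: leq_trans Hn.
  apply: proper_card. apply/properP; split.
  + apply/subsetP => v; rewrite !inE => vu; exact: lt_trans vu uz2.
  + exists u; by rewrite !inE ?ltxx.
Qed.

Theorem theorem5p10 (d : Order.disp_t) (L : finTBLatticeType d)
  (J : L -> L -> L -> int) (HJ : is_J J)
  (hL : (2 < #|[set: L]|)%N) (a b : L) (h0a : \bot < a) (hab : a < b) :
  (\sum_(x : L | (x `&` a == \bot)%O && (x <= b)%O) J x b \top)%R = 0%R.
Proof.
have step1 : forall x, x <= b -> x != b -> forall z, b <= z ->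
    (\sum_(a' | (x <= a')%O && (a' <= b)%O) J a' b z)%R = 0%R.
  move=> x xb xnb; apply: up_ind => z bz.
  rewrite exchange_big /= HJ // /delta3 (negbTE xnb) //.
have step2 : forall y, y <= a ->
    (\sum_(x | (y <= x)%O && (x <= b)%O) J x b \top)%R = 0%R.
  move=> y ya; apply: step1; last exact: lex1.
  - exact: le_trans ya (ltW hab).
  - apply/eqP => yb; move: hab; rewrite -yb => /(le_lt_trans ya); by rewrite ltxx.
pose T u := (\sum_(x : L | (x `&` a == u)%O && (x <= b)%O) J x b \top)%R.
have : T \bot = 0%R; last by [].
apply: (@down_ind _ _ T a); last exact: le0x.
move=> y ya.
have E := step2 y ya.
rewrite (eq_bigl (fun x => (y <= x `&` a) && (x <= b))) in E; last first.
  by move=> x; rewrite lexI ya andbT.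
rewrite (partition_big (fun x => x `&` a) (fun u => (y <= u) && (u <= a))) /= in E; last first.
  by move=> x /andP[-> _]; rewrite leIr.
rewrite -[RHS]E.
apply: eq_bigr => u /andP[yu ua]; rewrite /T.
apply: eq_bigl => x; case: eqP => [->|] /=; by rewrite ?yu ?andbF ?andbT.
Qed.
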